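(* Let $G$ be an undirected graph on vertex set $[m]$ with symmetric adjacency matrix $\mathcal{A}\in\{0,1\}^{m\times m}$, each vertex $i$ having a single attribute value $a_i\in[K]$ with one-hot encoding $h_i\in\{0,1\}^K$. Let $W\in\mathbb{R}^{r\times K}$, $f_i=Wh_i$, let $S:\mathbb{R}^r\times\mathbb{R}^r\to\mathbb{R}$ be any function, and let $\mathbf{S}\in\mathbb{R}^{m\times m}$ have entries $\mathbf{S}_{ji}=S(f_j,f_i)$. Let $F_{(1)}\in\mathbb{R}^{r\times m}$ be the matrix with columns $f_1,\dots,f_m$, and for $n\ge2$ let $F_{(n)}=\big(F_{(n-1)}(\mathcal{A}\odot\mathbf{S})\big)\odot F_{(1)}$; let $f_{(n)}=F_{(n)}\mathbf{1}$ with $\mathbf{1}\in\mathbb{R}^m$ the all-ones vector. Then for every $n\ge1$, $$f_{(n)}=W^{[n]}\,\Lambda_{(n)}\,c_{(n)}(G),$$ and consequently, for every $T\ge1$, $f_{[T]}=\mathcal{M}\Lambda c_{[T]}(G)$, where $f_{[T]}$ is the concatenation $[f_{(1)};\dots;f_{(T)}]$, $c_{[T]}$ is the concatenation $[c_{(1)};\dots;c_{(T)}]$, $\mathcal{M}$ is block-diagonal with diagonal blocks $W^{[1]},\dots,W^{[T]}$, and $\Lambda$ is block-diagonal with diagonal blocks $\Lambda_{(1)},\dots,\Lambda_{(T)}$.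
   Context: For $u\in[K]$ let $W(u)$ be the $u$-th column of $W$. A walk of length $n$ is a sequence of vertices $(p_1,\dots,p_n)$ with $\mathcal{A}_{p_k,p_{k+1}}=1$ for all $k<n$; its walk type is $(a_{p_1},\dots,a_{p_n})\in[K]^n$. The walk statistics vector $c_{(n)}(G)\in\mathbb{R}^{K^n}$ has entries indexed by walk types $v\in[K]^n$, the entry at $v$ being the number of walks of length $n$ in $G$ of type $v$. The walk weight of $v=(v_1,\dots,v_n)$ is $\lambda(v)=\prod_{k=1}^{n-1}S\big(W(v_{k+1}),W(v_k)\big)$ (equal to $1$ if $n=1$); $\Lambda_{(n)}$ is the $K^n\times K^n$ diagonal matrix with diagonal entry $\lambda(v)$ at index $v$. For a $d\times N$ matrix $A$ with columns $A_1,\dots,A_N$, its $\ell$-way column product $A^{[\ell]}$ is the $d\times N^\ell$ matrix whose column indexed by $(i_1,\dots,i_\ell)\in[N]^\ell$ is $A_{i_1}\odot\cdots\odot A_{i_\ell}$. $\odot$ denotes the entrywise product; the index orderings of $c_{(n)}$, $\Lambda_{(n)}$ and the columns of $W^{[n]}$ are the same. *)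

(* Defs.v *)
From HB Require Import structures.
From mathcomp Require Import all_boot all_order all_algebra.
Set Implicit Arguments. Unset Strict Implicit. Unset Printing Implicit Defensive.
Import Order.TTheory GRing.Theory Num.Theory.
Local Open Scope ring_scope.

Section Defs.
Variable R : realFieldType.

Definition hadamard (p q : nat) (X Y : 'M[R]_(p, q)) : 'M[R]_(p, q) :=
  \matrix_(i, j) (X i j * Y i j).

(* number of elements of [N]^n, indexed via enum_val of the finType n.-tuple 'I_N *)
Definition ntup (n N : nat) : nat := #|{: n.-tuple 'I_N}|.

(* l-way column product A^[l] of a d x N matrix: the column indexed by
   (i_1,...,i_l) (= enum_val j) is A_{i_1} ⊙ ... ⊙ A_{i_l} *)
Definition colprod (d N : nat) (X : 'M[R]_(d, N)) (l : nat) : 'M[R]_(d, ntup l N) :=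
  \matrix_(p, j) \prod_(k < l) X p (tnth (enum_val j) k).

Variables (m K r : nat).
Variable (Adj : 'M[R]_m) (a : 'I_m -> 'I_K) (W : 'M[R]_(r, K))
         (S : 'cV[R]_r -> 'cV[R]_r -> R).

Definition onehot (i : 'I_m) : 'cV[R]_K := \col_k (k == a i)%:R.
Definition feat (i : 'I_m) : 'cV[R]_r := W *m onehot i.

Definition F1 : 'M[R]_(r, m) := \matrix_(p, i) feat i p 0.
Definition Smat : 'M[R]_m := \matrix_(j, i) S (feat j) (feat i).

(* Fiter k = F_(k+1) *)
Fixpoint Fiter (k : nat) : 'M[R]_(r, m) :=
  if k is k'.+1 then hadamard (Fiter k' *m hadamard Adj Smat) F1 else F1.
Definition Fn (n : nat) : 'M[R]_(r, m) := Fiter n.-1.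

Definition fvec (n : nat) : 'cV[R]_r := Fn n *m const_mx 1.

Definition is_walk (n : nat) (p : n.-tuple 'I_m) : bool :=
  [forall i : 'I_n, forall j : 'I_n,
     (nat_of_ord j == (nat_of_ord i).+1) ==> (Adj (tnth p i) (tnth p j) == 1)].

Definition walk_type (n : nat) (p : n.-tuple 'I_m) : n.-tuple 'I_K :=
  [tuple a (tnth p k) | k < n].

Definition cvec (n : nat) : 'cV[R]_(ntup n K) :=
  \col_j (#|[set p : n.-tuple 'I_m | is_walk p && (walk_type p == enum_val j)]|)%:R.

Definition walk_weight (n : nat) (v : n.-tuple 'I_K) : R :=
  \prod_(i < n) \prod_(j < n | nat_of_ord j == (nat_of_ord i).+1)
     S (col (tnth v j) W) (col (tnth v i) W).

Definition Lam (n : nat) : 'M[R]_(ntup n K) :=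
  diag_mx (\row_j walk_weight (enum_val j)).

End Defs.

Definition bdiag (R : realFieldType) (T : nat) (p q : 'I_T -> nat)
  (B : forall i : 'I_T, 'M[R]_(p i, q i)) : 'M[R]_(\sum_(i < T) p i, \sum_(i < T) q i) :=
  @mxblock R T T p q (fun i j =>
     match i =P j with
     | ReflectT e => castmx (erefl (p i), congr1 q e) (B i)
     | ReflectF _ => 0
     end).

(* Main.v *)
Require Import Defs.
From HB Require Import structures.
From mathcomp Require Import all_boot all_order all_algebra.
From mathcomp Require Import ring.
Set Implicit Arguments. Unset Strict Implicit. Unset Printing Implicit Defensive.
Import Order.TTheory GRing.Theory Num.Theory.
Local Open Scope ring_scope.

Fixpoint pw (R : realFieldType) (T : Type) (c : T -> T -> R) (s : seq T) : R :=
  match s with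
  | x :: ((y :: _) as s') => c x y * pw c s'
  | _ => 1
  end.

Lemma dprod_pw (R : realFieldType) (T : Type) (x0 : T) (c : T -> T -> R)
  (s : seq T) : forall n (f : 'I_n -> T),
  (forall i : 'I_n, f i = nth x0 s i) -> size s = n ->
  \prod_(i < n) \prod_(j < n | nat_of_ord j == (nat_of_ord i).+1) c (f i) (f j)
  = pw c s.
Proof.
elim: s => [|x s IH] [|n] f Hf Hs //; first by rewrite big_ord0.
case: Hs => Hs.
rewrite big_ord_recl /=.
case: s IH Hf Hs => [|y s] IH Hf Hs.
  subst n; rewrite big_ord0 mulr1 big1 // => -[[|j] Hj] //.
have -> : pw c (y :: s) = \prod_(i < n) \prod_(j < n | nat_of_ord j == (nat_of_ord i).+1)
   c (f (lift ord0 i)) (f (lift ord0 j)).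
  by rewrite (IH n) // => i; rewrite Hf.
congr (_ * _).
  case: n f Hf Hs => [|n] f Hf //= Hs.
  rewrite big_mkcond big_ord_recl /= big_ord_recl /= big1 ?mulr1 ?mul1r.
    by rewrite !Hf.
  by move=> j _.
apply: eq_bigr => i _.
rewrite big_mkcond big_ord_recl /= mul1r [RHS]big_mkcond.
by apply: eq_bigr => j _.
Qed.

Lemma pw_cons2 (R : realFieldType) (T : Type) (c : T -> T -> R) x y s :
  pw c (x :: y :: s) = c x y * pw c (y :: s).
Proof. by []. Qed.

Lemma pw_mul (R : realFieldType) (T : Type) (c d : T -> T -> R) (s : seq T) :
  pw (fun x y => c x y * d x y) s = pw c s * pw d s.
Proof.
elim: s => [|x [|y s] IH]; [by rewrite /= mulr1 | by rewrite /= mulr1 |].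
by rewrite !pw_cons2 IH; ring.
Qed.

Lemma pw_map (R : realFieldType) (T U : Type) (f : T -> U) (c : U -> U -> R) (s : seq T) :
  pw c (map f s) = pw (fun x y => c (f x) (f y)) s.
Proof.
elim: s => [|x [|y s] IH] //.
by rewrite map_cons map_cons pw_cons2 -map_cons IH pw_cons2.
Qed.

Lemma sum_tuple_cons (R : realFieldType) (T : finType) n (F : seq T -> R) :
  \sum_(t : n.+1.-tuple T) F t = \sum_(x : T) \sum_(w : n.-tuple T) F (x :: w).
Proof.
rewrite pair_big /=.
rewrite (reindex (fun xw : T * n.-tuple T => [tuple of xw.1 :: xw.2])) //=.
exists (fun t : n.+1.-tuple T => (thead t, [tuple of behead t])).
  by move=> [x w] _ /=; congr (_, _); apply: val_inj.
by move=> t _; rewrite [in RHS](tuple_eta t).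
Qed.

Lemma sum_tuple0 (R : realFieldType) (T : finType) (F : seq T -> R) :
  \sum_(t : 0.-tuple T) F t = F [::].
Proof.
by rewrite (big_pred1 [tuple]) // => t; apply/esym/eqP; apply: tuple0.
Qed.

Section Main.
Variables (R : realFieldType) (m K r : nat).
Variables (Adj : 'M[R]_m) (a : 'I_m -> 'I_K) (W : 'M[R]_(r, K))
  (S : 'cV[R]_r -> 'cV[R]_r -> R).
Hypothesis Hsym : Adj^T = Adj.

Let ft := feat a W.
Let cc := fun x y : 'I_m => Adj x y * S (ft y) (ft x).
Let G p := fun s : seq 'I_m => (\prod_(x <- s) ft x p 0) * pw cc s.

Lemma Fiter_sum k p i :
  Fiter Adj a W S k p i = \sum_(w : k.-tuple 'I_m) G p (i :: w).
Proof.
elim: k i => [|k IH] i.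
  rewrite (sum_tuple0 (fun s => G p (i :: s))) /G /= big_seq1 mulr1.
  by rewrite /F1 mxE.
rewrite (sum_tuple_cons k (fun s => G p (i :: s))) /=.
rewrite /hadamard mxE mxE mulr_suml.
apply: eq_bigr => j _.
rewrite IH mulr_suml mulr_suml.
apply: eq_bigr => w _.
rewrite /G !big_cons pw_cons2 /cc /Smat /F1 !mxE.
have -> : Adj j i = Adj i j by rewrite -[in LHS]Hsym mxE.
rewrite /ft; ring.
Qed.

Lemma ft_E x p : ft x p 0 = W p (a x).
Proof.
rewrite /ft /feat /onehot mxE (bigD1 (a x)) //= mxE eqxx mulr1 big1 ?addr0 //.
by move=> k Hk; rewrite mxE (negbTE Hk) mulr0.
Qed.

Lemma ft_col x : ft x = col (a x) W.
Proof. by apply/matrixP => p q; rewrite ord1 ft_E mxE. Qed.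

Lemma fvec_sum k p : fvec Adj a W S k.+1 p 0 = \sum_(t : k.+1.-tuple 'I_m) G p t.
Proof.
rewrite (sum_tuple_cons k (G p)) /fvec mxE /Fn /=.
apply: eq_bigr => i _; rewrite mxE mulr1 Fiter_sum //.
Qed.

Hypothesis Hbin : forall i j, Adj i j = 0 \/ Adj i j = 1.

Lemma walk_prod n (t : n.-tuple 'I_m) :
  \prod_(i < n) \prod_(j < n | nat_of_ord j == (nat_of_ord i).+1) Adj (tnth t i) (tnth t j)
  = (is_walk Adj t)%:R.
Proof.
case: (boolP (is_walk Adj t)) => Hw.
  rewrite big1 // => i _; rewrite big1 // => j Hj.
  by move/forallP: Hw => /(_ i) /forallP /(_ j) /implyP /(_ Hj) /eqP.
have [i Hi] : exists i : 'I_n, ~~ [forall j : 'I_n, (nat_of_ord j == (nat_of_ord i).+1) ==> (Adj (tnth t i) (tnth t j) == 1)].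
  by apply/existsP; rewrite -negb_forall.
move: Hi; rewrite negb_forall => /existsP [j]; rewrite negb_imply => /andP [Hj Hne].
rewrite (bigD1 i) //= (bigD1 j) //=.
by case: (Hbin (tnth t i) (tnth t j)) => H; [rewrite H !mul0r | rewrite H eqxx in Hne].
Qed.

Definition Xv n p (v : n.-tuple 'I_K) : R :=
  (\prod_(q < n) W p (tnth v q)) * walk_weight W S v.

Lemma G_E k p (t : k.+1.-tuple 'I_m) :
  G p t = (is_walk Adj t)%:R * Xv p (walk_type a t).
Proof.
rewrite /G /Xv /cc pw_mul.
have x0 : 'I_m := tnth t ord0.
rewrite -(@dprod_pw _ _ x0 _ t k.+1 (fun q => tnth t q)) ?size_tuple //; last first.
  by move=> q; rewrite (tnth_nth x0).
rewrite walk_prod.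
rewrite -(@dprod_pw _ _ x0 _ t k.+1 (fun q => tnth t q)) ?size_tuple //; last first.
  by move=> q; rewrite (tnth_nth x0).
rewrite big_tuple /walk_weight.
under eq_bigr do rewrite ft_E.
have -> : \prod_(i < k.+1) W p (a (tnth t i)) = \prod_(q < k.+1) W p (tnth (walk_type a t) q).
  by apply: eq_bigr => q _; rewrite tnth_mktuple.
rewrite mulrCA; congr (_ * (_ * _)).
apply: eq_bigr => i _; apply: eq_bigr => j _.
by rewrite /walk_type !tnth_mktuple !ft_col.
Qed.

Lemma part1 k :
  fvec Adj a W S k.+1 = colprod W k.+1 *m Lam W S k.+1 *m cvec Adj a k.+1.
Proof.
apply/matrixP => p q; rewrite ord1 fvec_sum.
rewrite /Lam mul_mx_diag mxE.
under [RHS]eq_bigr do rewrite !mxE.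
have -> : \sum_(j < ntup k.+1 K) (\prod_(k0 < k.+1) W p (tnth (@enum_val _ {: k.+1.-tuple 'I_K} j) k0) *
       walk_weight W S (@enum_val _ {: k.+1.-tuple 'I_K} j) *
       (#|[set p0 | is_walk Adj p0 & walk_type a p0 == @enum_val _ {: k.+1.-tuple 'I_K} j]|)%:R)
  = \sum_(v : k.+1.-tuple 'I_K) Xv p v *
       (#|[set p0 | is_walk Adj p0 & walk_type a p0 == v]|)%:R.
  symmetry; rewrite (reindex (fun j : 'I_(ntup k.+1 K) => @enum_val _ {: k.+1.-tuple 'I_K} j)) //.
  by exists enum_rank => x _; [apply: enum_valK | apply: enum_rankK].
under [RHS]eq_bigr do rewrite mulr_natr -sumr_const big_mkcond.
rewrite exchange_big /=.
apply: eq_bigr => t _.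
rewrite G_E //.
rewrite -big_mkcond /=.
case: (boolP (is_walk Adj t)) => Hw.
  rewrite mul1r (eq_bigl (fun v => v == walk_type a t)) ?big_pred1_eq //.
  by move=> v; rewrite inE Hw /= eq_sym.
by rewrite mul0r big_pred0 // => v; rewrite inE (negbTE Hw).
Qed.
End Main.

Theorem theorem1 (R : realFieldType) (m K r : nat)
  (Adj : 'M[R]_m) (a : 'I_m -> 'I_K) (W : 'M[R]_(r, K))
  (S : 'cV[R]_r -> 'cV[R]_r -> R)
  (Hbin : forall i j, Adj i j = 0 \/ Adj i j = 1)
  (Hsym : Adj^T = Adj) :
  (forall n : nat, (0 < n)%N ->
     fvec Adj a W S n = colprod W n *m Lam W S n *m cvec Adj a n)
  /\
  (forall T : nat, (0 < T)%N ->
     \mxcol_(i < T) fvec Adj a W S i.+1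
     = bdiag (fun i : 'I_T => colprod W i.+1)
         *m \mxdiag_(i < T) Lam W S i.+1
         *m \mxcol_(i < T) cvec Adj a i.+1).
Proof.
have P1 : forall n : nat, (0 < n)%N ->
     fvec Adj a W S n = colprod W n *m Lam W S n *m cvec Adj a n.
  by case=> // k _; apply: part1.
split => // T _.
rewrite -mulmxA mul_mxdiag_mxcol /bdiag mul_mxblock_mxrow.
apply/eq_mxcol => i.
rewrite (bigD1 i) //= big1 ?addr0.
  case: (i =P i) => // e.
  by rewrite (eq_irrelevance (congr1 _ e) erefl) castmx_id P1 // mulmxA.
move=> j Hj; case: (i =P j) => [e|_]; last by rewrite mul0mx.
by rewrite e eqxx in Hj.
Qed.
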